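(* There is a formula $\phi$ of $\mathcal{D}(\mathsf{M})$ containing no dependence atoms (and no negated dependence atoms) such that $\phi$ is not $k$-coherent for any $k\in\mathbb N$ (in particular $\phi$ is not flat).
   Context: All structures are finite. Dependence logic with majority, $\mathcal{D}(\mathsf{M})[\tau]$: formulas over a vocabulary $\tau$ in negation normal form, built from first-order literals (atomic formulas and negated atomic formulas), dependence atoms $=\!(t_1,\dots,t_n)$ ($t_i$ terms) and their negations $\neg=\!(t_1,\dots,t_n)$, using $\wedge$, $\vee$, $\exists x$, $\forall x$ and $\mathsf{M}x$. Free variables are as in first-order logic ($\mathsf{M}x$ binds $x$), and the free variables of $=\!(t_1,\dots,t_n)$ are all variables occurring in $t_1,\dots,t_n$. A team $X$ over a structure $\mathfrak A$ with domain $A$ and with finite variable domain $\mathrm{dom}(X)$ is a set of assignments $s:\mathrm{dom}(X)\to A$. For $F:X\to A$ let $X(F/x)=\{s(F(s)/x): s\in X\}$ and $X(A/x)=\{s(a/x): s\in X, a\in A\}$, where $s(a/x)$ agrees with $s$ except that it maps $x$ to $a$. Satisfaction $\mathfrak A\models_X\phi$ (for teams whose domain contains the free variables of $\phi$): for a first-order literal, every $s\in X$ satisfies it in the usual sense; $\mathfrak A\models_X =\!(t_1,\dots,t_n)$ iff any $s,s'\in X$ giving equal values to $t_1,\dots,t_{n-1}$ give equal values to $t_n$ ($=\!()$ is always true); $\mathfrak A\models_X\neg=\!(t_1,\dots,t_n)$ iff $X=\emptyset$; $\mathfrak A\models_X\psi\wedge\chi$ iff both hold; $\mathfrak A\models_X\psi\vee\chi$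 iff $X=Y\cup Z$ with $\mathfrak A\models_Y\psi$ and $\mathfrak A\models_Z\chi$; $\mathfrak A\models_X\exists x\psi$ iff $\mathfrak A\models_{X(F/x)}\psi$ for some $F:X\to A$; $\mathfrak A\models_X\forall x\psi$ iff $\mathfrak A\models_{X(A/x)}\psi$; $\mathfrak A\models_X\mathsf{M}x\psi$ iff for at least $|A|^{|X|}/2$ many functions $F:X\to A$ we have $\mathfrak A\models_{X(F/x)}\psi$. A formula $\phi$ is $k$-coherent iff for all structures $\mathfrak A$ and all teams $X$ (with domain containing the free variables of $\phi$): $\mathfrak A\models_X\phi$ holds if and only if $\mathfrak A\models_{X'}\phi$ holds for every $k$-element subteam $X'\subseteq X$. $1$-coherent formulas are called flat. *)

(* Defs.v *)
From HB Require Import structures.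
From mathcomp Require Import all_boot.
Set Implicit Arguments. Unset Strict Implicit. Unset Printing Implicit Defensive.

Record vocab := Vocab {
  fsym : Type; farity : fsym -> nat;
  rsym : Type; rarity : rsym -> nat }.

(* A (finite) structure over tau.  Interpretations take argument lists;
   only lists of the correct arity are ever used for well-formed formulas
   (see [wf_formula]). *)
Record structure (tau : vocab) := Structure {
  dom :> finType;
  fint : fsym tau -> seq dom -> dom;
  rint : rsym tau -> seq dom -> bool }.

Section Syntax.
Variables (tau : vocab) (V : finType).

Inductive term : Type :=
  | TVar (x : V)
  | TApp (f : fsym tau) (ts : seq term).

Inductive literal : Type :=
  | LEq (t1 t2 : term)
  | LNEq (t1 t2 : term)
  | LRel (R : rsym tau) (ts : seq term)
  | LNRel (R : rsym tau) (ts : seq term).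

(* formulas in negation normal form *)
Inductive formula : Type :=
  | FLit (l : literal)
  | FDep (ts : seq term)
  | FNDep (ts : seq term)
  | FAnd (p q : formula)
  | FOr (p q : formula)
  | FEx (x : V) (p : formula)
  | FAll (x : V) (p : formula)
  | FMaj (x : V) (p : formula).

Fixpoint tvars (t : term) : seq V :=
  match t with
  | TVar x => [:: x]
  | TApp _ ts => flatten (map tvars ts)
  end.

Fixpoint twf (t : term) : bool :=
  match t with
  | TVar _ => true
  | TApp f ts => (size ts == farity f) && all id (map twf ts)
  end.

Definition lvars (l : literal) : seq V :=
  match l with
  | LEq t1 t2 | LNEq t1 t2 => tvars t1 ++ tvars t2
  | LRel _ ts | LNRel _ ts => flatten (map tvars ts)
  end.

Definition lwf (l : literal) : bool :=
  match l with
  | LEq t1 t2 | LNEq t1 t2 => twf t1 && twf t2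
  | LRel R ts | LNRel R ts => (size ts == rarity R) && all twf ts
  end.

Fixpoint fv (phi : formula) : seq V :=
  match phi with
  | FLit l => lvars l
  | FDep ts | FNDep ts => flatten (map tvars ts)
  | FAnd p q | FOr p q => fv p ++ fv q
  | FEx x p | FAll x p | FMaj x p => filter (fun y => y != x) (fv p)
  end.

Fixpoint wf_formula (phi : formula) : bool :=
  match phi with
  | FLit l => lwf l
  | FDep ts | FNDep ts => all twf ts
  | FAnd p q | FOr p q => wf_formula p && wf_formula q
  | FEx _ p | FAll _ p | FMaj _ p => wf_formula p
  end.

Fixpoint dep_free (phi : formula) : bool :=
  match phi with
  | FLit _ => true
  | FDep _ | FNDep _ => false
  | FAnd p q | FOr p q => dep_free p && dep_free q
  | FEx _ p | FAll _ p | FMaj _ p => dep_free p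
  end.

End Syntax.

Section Semantics.
Variables (tau : vocab) (V : finType) (M : structure tau).

(* An assignment with finite domain D ⊆ V is a finite function
   V -> option M, with value None exactly outside D. *)
Definition asg := {ffun V -> option M}.

Definition supd (s : asg) (x : V) (a : M) : asg :=
  [ffun v => if v == x then Some a else s v].

Fixpoint osequence (l : seq (option M)) : option (seq M) :=
  match l with
  | [::] => Some [::]
  | o :: l' => match o, osequence l' with
               | Some a, Some r => Some (a :: r)
               | _, _ => None
               end
  end.

Fixpoint teval (s : asg) (t : term tau V) : option M :=
  match t with
  | TVar x => s x
  | TApp f ts => omap (fint f) (osequence (map (teval s) ts))
  end.

Definition lit_holds (s : asg) (l : literal tau V) : Prop :=
  match l with
  | LEq t1 t2 => teval s t1 = teval s t2
  | LNEq t1 t2 => teval s t1 <> teval s t2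
  | LRel R ts => if osequence (map (teval s) ts) is Some vs then rint R vs else false
  | LNRel R ts => if osequence (map (teval s) ts) is Some vs then ~~ rint R vs else false
  end.

(* =(t1,...,tn): agreement on t1..t_{n-1} forces agreement on t_n;
   for n = 0 both lists are empty and the atom is trivially true. *)
Definition dep_holds (X : {set asg}) (ts : seq (term tau V)) : Prop :=
  let n := (size ts).-1 in
  forall s s', s \in X -> s' \in X ->
    map (teval s) (take n ts) = map (teval s') (take n ts) ->
    map (teval s) (drop n ts) = map (teval s') (drop n ts).

Fixpoint sat (phi : formula tau V) (X : {set asg}) {struct phi} : Prop :=
  match phi with
  | FLit l => forall s, s \in X -> lit_holds s l
  | FDep ts => dep_holds X ts
  | FNDep _ => X = set0
  | FAnd p q => sat p X /\ sat q X
  | FOr p q => exists Y Z : {set asg}, X = Y :|: Z /\ sat p Y /\ sat q Z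
  | FEx x p => exists F : {ffun asg -> M},
                 sat p [set supd s x (F s) | s in X]
  | FAll x p => sat p [set supd s x a | s in X, a in [set: M]]
  | FMaj x p =>
      (* S = the set of functions F : X -> M with  M |=_{X(F/x)} p ;
         condition  #S >= |M|^|X| / 2 *)
      exists S : {set {ffun {s : asg | s \in X} -> M}},
        (forall F, F \in S <-> sat p [set supd (val s) x (F s) | s : {s : asg | s \in X}])
        /\ #|M| ^ #|X| <= 2 * #|S|
  end.

Definition team_on (D : {set V}) (X : {set asg}) : Prop :=
  forall s, s \in X -> forall v, (s v != None) = (v \in D).

End Semantics.

Definition coherent (tau : vocab) (V : finType) (k : nat) (phi : formula tau V) : Prop :=
  forall (M : structure tau), 0 < #|M| ->
  forall (D : {set V}) (X : {set asg V M}),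
    team_on D X -> {subset fv phi <= D} ->
    (sat phi X <-> (forall X' : {set asg V M}, X' \subset X -> #|X'| = k -> sat phi X')).

(* Main.v *)
Require Import Defs.
From mathcomp Require Import all_boot.

Definition tau0 : vocab :=
  @Vocab Empty_set (fun e => match e with end) unit (fun _ => 1).

Definition Mn (n : nat) : structure tau0 :=
  @Structure tau0 ('I_n.+1 : finType) (fun f _ => match f with end)
    (fun _ vs => vs == [:: ord0]).

Definition phi0 : formula tau0 unit := FMaj tt (FLit (LRel (tt : rsym tau0) [:: TVar tau0 tt])).

Lemma inner n (X : {set asg unit (Mn n)}) (F : {ffun {s : asg unit (Mn n) | s \in X} -> Mn n}) :
  sat (FLit (LRel (tt : rsym tau0) [:: TVar tau0 tt])) [set supd (val s) tt (F s) | s : {s : asg unit (Mn n) | s \in X}]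
  <-> forall s, F s = ord0.
Proof.
split.
- move=> H s.
  have : supd (val s) tt (F s) \in [set supd (val s) tt (F s) | s : {s : asg unit (Mn n) | s \in X}].
    by apply/imsetP; exists s.
  move/H.
  rewrite /= /supd ffunE eqxx /=.
  by move/eqP => [].
- move=> H s' /imsetP [s _ ->].
  by rewrite /= /supd ffunE eqxx /= H.
Qed.

Lemma key n (X : {set asg unit (Mn n)}) : sat phi0 X <-> #|Mn n| ^ #|X| <= 2.
Proof.
split.
- move=> [S [chr cS]].
  have sub : S \subset [set [ffun=> (ord0 : Mn n)]].
    apply/subsetP => F /chr /inner HF.
    rewrite inE; apply/eqP/ffunP => s; by rewrite ffunE HF.
  have := subset_leq_card sub; rewrite cards1 => c1.
  apply: (leq_trans cS). by rewrite -[2 in X in _ <= X]muln1 leq_mul2l c1 orbT.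
- move=> H; exists [set [ffun=> (ord0 : Mn n)]]; split.
  + move=> F; rewrite inE; split.
    * move/eqP=> ->; apply/inner => s; by rewrite ffunE.
    * move/inner=> HF; apply/eqP/ffunP => s; by rewrite ffunE HF.
  + by rewrite cards1.
Qed.

Definition sa n (a : 'I_n.+1) : asg unit (Mn n) := [ffun _ => Some a].

Lemma team_ok n (X : {set asg unit (Mn n)}) :
  (forall s, s \in X -> exists a : 'I_n.+1, s = sa n a) -> team_on [set: unit] X.
Proof.
move=> H s /H [a ->] v; by rewrite ffunE in_setT.
Qed.

Theorem mainTheorem3 :
  exists (tau : vocab) (V : finType) (phi : formula tau V),
    wf_formula phi /\ dep_free phi /\ forall k : nat, ~ coherent k phi.
Proof.
exists tau0, (unit : finType), phi0; split; first by []; split; first by [].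
move=> k Hc.
case: (eqVneq k 1) Hc => [->|k1] Hc.
-
  have X2 : team_on [set: unit] [set sa 1 ord0; sa 1 ord_max].
    apply: team_ok => s; rewrite !inE => /orP [] /eqP ->; by eexists.
  have pos1 : 0 < #|Mn 1| by rewrite card_ord.
  have [_ H] := Hc (Mn 1) pos1 _ _ X2 (fun s _ => in_setT s).
  have c2 : #|[set sa 1 ord0; sa 1 ord_max]| = 2.
    rewrite cards2.
    case: eqP => // /ffunP /(_ tt); rewrite !ffunE => E; by case: E.
  idtac.
  have : #|Mn 1| ^ #|[set sa 1 ord0; sa 1 ord_max]| <= 2.
    apply/key; apply: H => X' _ cX'.
    apply/key; by rewrite cX' card_ord.
  by rewrite card_ord c2.
- have X1 : team_on [set: unit] [set sa 2 ord0].
    apply: team_ok => s; rewrite !inE => /eqP ->; by eexists.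
  have pos2 : 0 < #|Mn 2| by rewrite card_ord.
  have [_ H] := Hc (Mn 2) pos2 _ _ X1 (fun s _ => in_setT s).
  have : #|Mn 2| ^ #|[set sa 2 ord0]| <= 2.
    apply/key; apply: H => X' sX' cX'.
    apply/key; rewrite cX'.
    case: k k1 cX' {Hc} => [|[|k]] // _ cX'.
    have := subset_leq_card sX'; by rewrite cX' cards1.
  by rewrite card_ord cards1.
Qed.
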